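(* Let $m>-\tfrac12$ be real and $k$ a (real or complex) number, and let $c_n=\int_{-\infty}^{\infty} e^{-mx^2}e^{ikx}\,\widehat{H}_n(x)\,dx$ for $n\ge 0$, so that $e^{-mx^2}e^{ikx}=\sum_{n\ge0}c_n\widehat{H}_n$. Then for all $n\ge 1$, \[ c_{n+1}=\frac{1}{2m+1}\, ik\sqrt{\frac{2}{n+1}}\,c_n-\frac{2m-1}{2m+1}\sqrt{\frac{n}{n+1}}\,c_{n-1}. \]
   Context: The Hermite polynomials $H_n$ are orthogonal on $\mathbb{R}$ with respect to $e^{-x^2}$, with $\int H_mH_ne^{-x^2}dx=\sqrt{\pi}\,2^n n!\,\delta_{mn}$. The (normalized) Hermite functions are $\widehat{H}_n(x)=\frac{1}{\pi^{1/4}\sqrt{2^n n!}}e^{-x^2/2}H_n(x)$, $n\ge0$; they form an orthonormal basis of $L^2(\mathbb{R})$. *)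

(* Defs.v *)
From Stdlib Require Import Reals Factorial.
From Coquelicot Require Import Coquelicot.
Open Scope R_scope.

(* Physicists' Hermite polynomials: H_0 = 1, H_1 = 2x,
   H_{n+2} = 2x H_{n+1} - 2(n+1) H_n. *)
Fixpoint hermite_pair (n : nat) (x : R) : R * R :=
  match n with
  | O => (1, 2 * x)
  | S p => let (a, b) := hermite_pair p x in (b, 2 * x * b - 2 * INR (S p) * a)
  end.
Definition hermite (n : nat) (x : R) : R := fst (hermite_pair n x).

Definition hermite_fun (n : nat) (x : R) : R :=
  / (Rpower PI (1/4) * sqrt (2 ^ n * INR (fact n))) * exp (- x ^ 2 / 2) * hermite n x.

Definition cexp (z : C) : C := (exp (Re z) * cos (Im z), exp (Re z) * sin (Im z)).

Definition hermite_coef (m : R) (k : C) (n : nat) : C :=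
  @RInt_gen C_R_CompleteNormedModule
    (fun x : R => ((RtoC (exp (- m * x ^ 2)) * cexp (Ci * k * RtoC x))
                   * RtoC (hermite_fun n x))%C)
    (Rbar_locally m_infty) (Rbar_locally p_infty).

(* Main.v *)
Require Import Defs.
From Stdlib Require Import Reals Factorial Lra Lia Psatz.
From Coquelicot Require Import Coquelicot.
Open Scope R_scope.
Lemma herm0 x : hermite 0 x = 1.
Proof. reflexivity. Qed.
Lemma herm1 x : hermite 1 x = 2 * x.
Proof. reflexivity. Qed.
Lemma hermSS p x : hermite (S (S p)) x = 2 * x * hermite (S p) x - 2 * INR (S p) * hermite p x.
Proof.
  unfold hermite. simpl hermite_pair.
  destruct (hermite_pair p x) as [a b] eqn:E. simpl. reflexivity.
Qed.

Lemma herm_derive_pair p x :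
  is_derive (hermite (S p)) x (2 * INR (S p) * hermite p x) /\
  is_derive (hermite (S (S p))) x (2 * INR (S (S p)) * hermite (S p) x).
Proof.
  induction p as [|p [IH1 IH2]].
  - split.
    + apply (is_derive_ext (fun t => 2 * t)). { intro t. rewrite herm1. reflexivity. }
      rewrite herm0. auto_derive; auto. simpl; ring.
    + apply (is_derive_ext (fun t => 2 * t * (2 * t) - 2 * 1 * 1)). { intro t. rewrite hermSS, herm1, herm0. simpl. ring. }
      rewrite herm1. auto_derive; auto. simpl; ring.
  - split; [exact IH2|].
    apply (is_derive_ext (fun t => minus (mult (2 * t) (hermite (S (S p)) t)) (scal (2 * INR (S (S p))) (hermite (S p) t)))).
    { intro t. rewrite (hermSS (S p) t). unfold minus, plus, opp, mult, scal; cbn -[INR hermite]. unfold mult; cbn -[INR hermite]. ring. }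
    evar (d : R).
    replace (2 * INR (S (S (S p))) * hermite (S (S p)) x) with d.
    + apply @is_derive_minus.
      * apply @is_derive_mult; [|exact IH2|intros; apply Rmult_comm].
        auto_derive; auto.
      * apply @is_derive_scal. exact IH1.
    + unfold d. rewrite (hermSS p x). rewrite !S_INR. simpl.
      unfold minus, plus, opp, mult, scal; simpl. unfold mult; simpl. ring.
Qed.

Lemma herm_derive n x : is_derive (hermite n) x (2 * INR n * hermite (pred n) x).
Proof.
  destruct n.
  - apply (is_derive_ext (fun _ => 1)). { intro t. rewrite herm0. reflexivity. }
    auto_derive; auto. simpl; ring.
  - apply (herm_derive_pair n x).
Qed.

Lemma herm_ex_derive n x : ex_derive (hermite n) x.
Proof. eexists. apply herm_derive. Qed.

Lemma exp_le_mono a b : a <= b -> exp a <= exp b.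
Proof. intro h. destruct (Rle_lt_or_eq_dec _ _ h) as [h'|h'].
  - left. apply exp_increasing. exact h'.
  - rewrite h'. lra. Qed.

Lemma herm_bound n : exists A, 0 <= A /\ forall x, Rabs (hermite n x) <= A * exp (INR n * Rabs x).
Proof.
  assert (H: forall p, (exists A, 0 <= A /\ forall x, Rabs (hermite p x) <= A * exp (INR p * Rabs x)) /\
                      (exists A, 0 <= A /\ forall x, Rabs (hermite (S p) x) <= A * exp (INR (S p) * Rabs x))).
  { induction p as [|p [[A [HA IA]] [B [HB IB]]]].
    - split.
      + exists 1. split; [lra|]. intro x. rewrite herm0. simpl. rewrite Rmult_0_l, exp_0, Rabs_R1. lra.
      + exists 2. split; [lra|]. intro x. rewrite herm1. simpl.
        rewrite Rmult_1_l, Rabs_mult, (Rabs_right 2) by lra.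
        pose proof (exp_ineq1_le (Rabs x)). lra.
    - split; [exists B; auto|].
      exists (2 * B + 2 * INR (S p) * A). split.
      { pose proof (pos_INR (S p)). nra. }
      intro x. rewrite hermSS.
      pose proof (IA x) as Ha. pose proof (IB x) as Hb.
      pose proof (exp_ineq1_le (Rabs x)) as He.
      pose proof (Rabs_pos x).
      pose proof (pos_INR (S p)) as Hp.
      assert (E1: exp (INR (S (S p)) * Rabs x) = exp (Rabs x) * exp (INR (S p) * Rabs x)).
      { rewrite <- exp_plus. f_equal. rewrite (S_INR (S p)). ring. }
      assert (E2: exp (INR p * Rabs x) <= exp (INR (S (S p)) * Rabs x)).
      { apply exp_le_mono. apply Rmult_le_compat_r; auto. apply le_INR. lia. }
      pose proof (exp_pos (INR (S p) * Rabs x)).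
      pose proof (exp_pos (Rabs x)).
      pose proof (Rabs_pos (hermite (S p) x)).
      pose proof (Rabs_pos (hermite p x)).
      assert (T: Rabs (2 * x * hermite (S p) x - 2 * INR (S p) * hermite p x)
                 <= 2 * Rabs x * Rabs (hermite (S p) x) + 2 * INR (S p) * Rabs (hermite p x)).
      { unfold Rminus. eapply Rle_trans; [apply Rabs_triang|].
        rewrite Rabs_Ropp, !Rabs_mult, (Rabs_right 2) by lra. rewrite (Rabs_right (INR (S p))) by lra. lra. }
      rewrite E1 in *.
      assert (2 * Rabs x * Rabs (hermite (S p) x) <= 2 * B * (exp (Rabs x) * exp (INR (S p) * Rabs x))).
      { apply Rle_trans with (2 * exp (Rabs x) * (B * exp (INR (S p) * Rabs x))).
        - apply Rmult_le_compat; nra.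
        - nra. }
      assert (2 * INR (S p) * Rabs (hermite p x) <= 2 * INR (S p) * A * (exp (Rabs x) * exp (INR (S p) * Rabs x))).
      { apply Rle_trans with (2 * INR (S p) * (A * exp (INR p * Rabs x))).
        - apply Rmult_le_compat_l; [lra|auto].
        - replace (2 * INR (S p) * (A * exp (INR p * Rabs x))) with ((2 * INR (S p) * A) * exp (INR p * Rabs x)) by ring.
          apply Rmult_le_compat_l; [nra|exact E2]. }
      nra. }
  apply H.
Qed.
Lemma small_tail K (eps : R) : 0 <= K -> 0 < eps -> exists M, 0 <= M /\ forall t, M <= t -> K * exp (- t) < eps.
Proof.
  intros HK He. exists (Rabs (ln ((K + 1) / eps))). split; [apply Rabs_pos|].
  intros t Ht.
  assert (P: 0 < (K + 1) / eps) by (apply Rdiv_lt_0_compat; lra).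
  assert (exp (- t) <= eps / (K + 1)).
  { apply Rle_trans with (exp (- ln ((K + 1) / eps))).
    - apply exp_le_mono. pose proof (Rle_abs (ln ((K + 1) / eps))). lra.
    - rewrite exp_Ropp, exp_ln by exact P. right. field. lra. }
  pose proof (exp_pos (- t)).
  apply Rle_lt_trans with (K * (eps / (K + 1))).
  - apply Rmult_le_compat_l; auto.
  - apply Rlt_le_trans with ((K + 1) * (eps / (K + 1))).
    + apply Rmult_lt_compat_r; [apply Rdiv_lt_0_compat|]; lra.
    + right. field. lra.
Qed.

Lemma lim0_gen (f : R -> R) K : 0 <= K -> (forall x, Rabs (f x) <= K * exp (- Rabs x)) ->
  filterlim f (Rbar_locally p_infty) (locally 0) /\ filterlim f (Rbar_locally m_infty) (locally 0).
Proof.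
  intros HK Hf. split; apply filterlim_locally; intros [eps Heps];
  destruct (small_tail K eps HK Heps) as [M [HM0 HM]]; simpl.
  - exists M. intros x Hx. unfold ball; simpl; unfold AbsRing_ball, abs, minus, plus, opp; simpl.
    rewrite Ropp_0, Rplus_0_r. eapply Rle_lt_trans; [apply Hf|]. apply HM.
    rewrite Rabs_right; lra.
  - exists (- M). intros x Hx. unfold ball; simpl; unfold AbsRing_ball, abs, minus, plus, opp; simpl.
    rewrite Ropp_0, Rplus_0_r. eapply Rle_lt_trans; [apply Hf|]. apply HM.
    rewrite Rabs_left; lra.
Qed.

Section Ex.
Variable f : R -> R.
Variable K : R.
Hypothesis HK : 0 <= K.
Hypothesis Hc : forall x, continuous f x.
Hypothesis Hb : forall x, Rabs (f x) <= K * exp (- Rabs x).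

Lemma exR a b : ex_RInt f a b.
Proof. apply (@ex_RInt_continuous R_CompleteNormedModule). intros; apply Hc. Qed.

Lemma tail_pos u v : 0 <= u -> u <= v -> Rabs (RInt f u v) <= K * exp (- u).
Proof.
  intros Hu Huv.
  assert (I: is_RInt (fun x => K * exp (- x)) u v (minus ((fun x => - K * exp (- x)) v) ((fun x => - K * exp (- x)) u))).
  { apply (@is_RInt_derive R_CompleteNormedModule (fun x => - K * exp (- x)) (fun x => K * exp (- x))).
    - intros x _. auto_derive; auto. ring.
    - intros x _. apply (@ex_derive_continuous R_AbsRing R_NormedModule). auto_derive; auto. }
  assert (Rabs (RInt f u v) <= minus ((fun x => - K * exp (- x)) v) ((fun x => - K * exp (- x)) u)).
  { apply (norm_RInt_le f (fun x => K * exp (- x)) u v); [exact Huv| |apply (@RInt_correct R_CompleteNormedModule), exR|exact I].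
    intros x Hx. eapply Rle_trans; [apply Hb|]. rewrite Rabs_right by lra. lra. }
  unfold minus, plus, opp in H; simpl in H. pose proof (exp_pos (- v)). nra.
Qed.

Lemma tail_neg u v : v <= 0 -> u <= v -> Rabs (RInt f u v) <= K * exp v.
Proof.
  intros Hv Huv.
  assert (I: is_RInt (fun x => K * exp x) u v (minus ((fun x => K * exp x) v) ((fun x => K * exp x) u))).
  { apply (@is_RInt_derive R_CompleteNormedModule (fun x => K * exp x) (fun x => K * exp x)).
    - intros x _. auto_derive; auto. ring.
    - intros x _. apply (@ex_derive_continuous R_AbsRing R_NormedModule). auto_derive; auto. }
  assert (Rabs (RInt f u v) <= minus ((fun x => K * exp x) v) ((fun x => K * exp x) u)).
  { apply (norm_RInt_le f (fun x => K * exp x) u v); [exact Huv| |apply (@RInt_correct R_CompleteNormedModule), exR|exact I].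
    intros x Hx. eapply Rle_trans; [apply Hb|]. rewrite Rabs_left1 by lra. rewrite Ropp_involutive. lra. }
  unfold minus, plus, opp in H; simpl in H. pose proof (exp_pos u). nra.
Qed.

Definition G x := RInt f 0 x.

Lemma G_diff u v : G v - G u = RInt f u v.
Proof.
  unfold G. rewrite <- (RInt_Chasles f 0 u v) by apply exR.
  unfold plus; simpl. ring.
Qed.

Lemma G_derive x : is_derive G x (f x).
Proof.
  apply (@is_derive_RInt R_NormedModule f G 0 x); [|apply Hc].
  apply filter_forall. intros y. apply (@RInt_correct R_CompleteNormedModule), exR.
Qed.

Lemma ex_int_gen : exists l, is_RInt_gen f (Rbar_locally m_infty) (Rbar_locally p_infty) l.
Proof.
  assert (Lp: exists y, filterlim G (Rbar_locally p_infty) (locally y)).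
  { apply filterlim_locally_cauchy.
    intros [eps Heps]. destruct (small_tail K eps HK Heps) as [M [HM0 HM]].
    exists (fun x => M < x). split; [exists M; auto|].
    intros u v Hu Hv. unfold ball; simpl; unfold AbsRing_ball, abs, minus, plus, opp; simpl.
    change (G v + - G u) with (G v - G u). rewrite G_diff.
    destruct (Rle_dec u v).
    - eapply Rle_lt_trans; [apply tail_pos; lra|]. apply HM; lra.
    - rewrite <- opp_RInt_swap by apply exR. unfold opp; simpl. rewrite Rabs_Ropp.
      eapply Rle_lt_trans; [apply tail_pos; lra|]. apply HM; lra. }
  assert (Lm: exists y, filterlim G (Rbar_locally m_infty) (locally y)).
  { apply filterlim_locally_cauchy.
    intros [eps Heps]. destruct (small_tail K eps HK Heps) as [M [HM0 HM]].
    exists (fun x => x < - M). split; [exists (- M); auto|].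
    intros u v Hu Hv. unfold ball; simpl; unfold AbsRing_ball, abs, minus, plus, opp; simpl.
    change (G v + - G u) with (G v - G u). rewrite G_diff.
    destruct (Rle_dec u v).
    - eapply Rle_lt_trans; [apply tail_neg; lra|].
      replace v with (- - v) by ring. apply HM; lra.
    - rewrite <- opp_RInt_swap by apply exR. unfold opp; simpl. rewrite Rabs_Ropp.
      eapply Rle_lt_trans; [apply tail_neg; lra|].
      replace u with (- - u) by ring. apply HM; lra. }
  destruct Lp as [lb Hlb]. destruct Lm as [la Hla].
  exists (lb - la).
  apply (is_RInt_gen_ext (Derive G)).
  - apply (Filter_prod _ _ _ (fun _ => True) (fun _ => True)); try apply filter_true.
    intros x y _ _ t _. apply is_derive_unique, G_derive.
  - apply is_RInt_gen_Derive; auto.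
    + apply (Filter_prod _ _ _ (fun _ => True) (fun _ => True)); try apply filter_true.
      intros x y _ _ t _. eexists; apply G_derive.
    + apply (Filter_prod _ _ _ (fun _ => True) (fun _ => True)); try apply filter_true.
      intros x y _ _ t _. apply (continuous_ext f). { intro z. symmetry. apply is_derive_unique, G_derive. }
      apply Hc.
Qed.
End Ex.
Lemma is_RInt_gen_pair (u v : R -> R) (U V : R) :
  is_RInt_gen u (Rbar_locally m_infty) (Rbar_locally p_infty) U ->
  is_RInt_gen v (Rbar_locally m_infty) (Rbar_locally p_infty) V ->
  @is_RInt_gen C_R_NormedModule (fun x => (u x, v x)) (Rbar_locally m_infty) (Rbar_locally p_infty) (U, V).
Proof.
  intros Hu Hv P [eps HP].
  specialize (Hu (ball U eps) (locally_ball U eps)).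
  specialize (Hv (ball V eps) (locally_ball V eps)).
  unfold filtermapi in *.
  generalize (filter_and _ _ Hu Hv). apply filter_imp.
  intros [a b] [[y1 [H1 B1]] [y2 [H2 B2]]].
  exists (y1, y2). split.
  - apply (is_RInt_fct_extend_pair (U:=R_NormedModule) (V:=R_NormedModule)); simpl; assumption.
  - apply HP. split; assumption.
Qed.

Lemma ext_all {W : NormedModule R_AbsRing} (f g : R -> W) l :
  (forall x, f x = g x) ->
  is_RInt_gen f (Rbar_locally m_infty) (Rbar_locally p_infty) l ->
  is_RInt_gen g (Rbar_locally m_infty) (Rbar_locally p_infty) l.
Proof.
  intros E. apply is_RInt_gen_ext.
  apply (Filter_prod _ _ _ (fun _ => True) (fun _ => True)); try apply filter_true.
  intros; apply E.
Qed.

Lemma comb4 (f1 f2 f3 f4 : R -> R) l1 l2 l3 l4 a b c d :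
  is_RInt_gen f1 (Rbar_locally m_infty) (Rbar_locally p_infty) l1 ->
  is_RInt_gen f2 (Rbar_locally m_infty) (Rbar_locally p_infty) l2 ->
  is_RInt_gen f3 (Rbar_locally m_infty) (Rbar_locally p_infty) l3 ->
  is_RInt_gen f4 (Rbar_locally m_infty) (Rbar_locally p_infty) l4 ->
  is_RInt_gen (fun x => a * f1 x + b * f2 x + c * f3 x + d * f4 x)
    (Rbar_locally m_infty) (Rbar_locally p_infty) (a * l1 + b * l2 + c * l3 + d * l4).
Proof.
  intros H1 H2 H3 H4.
  apply (is_RInt_gen_scal _ a) in H1. apply (is_RInt_gen_scal _ b) in H2.
  apply (is_RInt_gen_scal _ c) in H3. apply (is_RInt_gen_scal _ d) in H4.
  pose proof (is_RInt_gen_plus _ _ _ _ (is_RInt_gen_plus _ _ _ _ (is_RInt_gen_plus _ _ _ _ H1 H2) H3) H4) as H.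
  exact H.
Qed.

Lemma uniq0 (f : R -> R) l1 l2 :
  is_RInt_gen f (Rbar_locally m_infty) (Rbar_locally p_infty) l1 ->
  is_RInt_gen f (Rbar_locally m_infty) (Rbar_locally p_infty) l2 -> l1 = l2.
Proof.
  intros H1 H2.
  transitivity (@RInt_gen R_CompleteNormedModule f (Rbar_locally m_infty) (Rbar_locally p_infty)).
  - symmetry. apply (@is_RInt_gen_unique R_CompleteNormedModule); auto; apply Proper_StrongProper, Rbar_locally_filter.
  - apply (@is_RInt_gen_unique R_CompleteNormedModule); auto; apply Proper_StrongProper, Rbar_locally_filter.
Qed.

Section Main.
Variables (m kr ki : R).
Hypothesis hm : - (1/2) < m.

Definition w j x := exp (- m * x ^ 2) * exp (- ki * x) * exp (- x ^ 2 / 2) * hermite j x.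
Definition u j x := w j x * cos (kr * x).
Definition v j x := w j x * sin (kr * x).

Lemma w_bound j : exists K, 0 <= K /\ forall x, Rabs (w j x) <= K * exp (- Rabs x).
Proof.
  destruct (herm_bound j) as [A [HA IA]].
  set (al := m + 1/2). set (be := Rabs ki + INR j + 1).
  assert (Hal : 0 < al) by (unfold al; lra).
  set (C := be ^ 2 / (4 * al)).
  exists (A * exp C). split.
  { pose proof (exp_pos C). nra. }
  intro x. unfold w.
  rewrite !Rabs_mult, !(Rabs_right (exp _)) by (apply Rle_ge, Rlt_le, exp_pos).
  rewrite <- !exp_plus.
  apply Rle_trans with (exp (- m * x ^ 2 + - ki * x + - x ^ 2 / 2) * (A * exp (INR j * Rabs x))).
  { apply Rmult_le_compat_l; [apply Rlt_le, exp_pos|apply IA]. }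
  rewrite (Rmult_comm A), <- Rmult_assoc, <- exp_plus, Rmult_comm, Rmult_assoc, <- exp_plus.
  apply Rmult_le_compat_l; [exact HA|]. apply exp_le_mono.
  assert (X2 : x ^ 2 = Rabs x ^ 2) by (rewrite <- (pow2_abs x); reflexivity).
  assert (Kx : - ki * x <= Rabs ki * Rabs x).
  { rewrite <- Rabs_mult. rewrite <- Rabs_Ropp. replace (- (ki * x)) with (- ki * x) by ring. apply Rle_abs. }
  set (t := Rabs x) in *. pose proof (Rabs_pos x).
  assert (HC : 4 * al * C = be ^ 2) by (unfold C; field; lra).
  assert (0 <= (2 * al * t - be) ^ 2) by (apply pow2_ge_0).
  rewrite X2.
  assert (al * (C - (- al * t ^ 2 + be * t)) >= 0) by nra.
  unfold al, be in *. nra.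
Qed.

Lemma u_bound j : exists K, 0 <= K /\ forall x, Rabs (u j x) <= K * exp (- Rabs x).
Proof.
  destruct (w_bound j) as [K [HK IK]]. exists K; split; auto. intro x. unfold u.
  rewrite Rabs_mult. pose proof (COS_bound (kr * x)). pose proof (Rabs_pos (w j x)).
  apply Rle_trans with (Rabs (w j x) * 1); [|rewrite Rmult_1_r; apply IK].
  apply Rmult_le_compat_l; auto. apply Rabs_le; lra.
Qed.

Lemma v_bound j : exists K, 0 <= K /\ forall x, Rabs (v j x) <= K * exp (- Rabs x).
Proof.
  destruct (w_bound j) as [K [HK IK]]. exists K; split; auto. intro x. unfold v.
  rewrite Rabs_mult. pose proof (SIN_bound (kr * x)). pose proof (Rabs_pos (w j x)).
  apply Rle_trans with (Rabs (w j x) * 1); [|rewrite Rmult_1_r; apply IK].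
  apply Rmult_le_compat_l; auto. apply Rabs_le; lra.
Qed.

Lemma u_exd j x : ex_derive (u j) x.
Proof. unfold u, w. auto_derive. apply herm_ex_derive. Qed.
Lemma v_exd j x : ex_derive (v j) x.
Proof. unfold v, w. auto_derive. apply herm_ex_derive. Qed.
Lemma u_cont j x : continuous (u j) x.
Proof. apply (@ex_derive_continuous R_AbsRing R_NormedModule), u_exd. Qed.
Lemma v_cont j x : continuous (v j) x.
Proof. apply (@ex_derive_continuous R_AbsRing R_NormedModule), v_exd. Qed.

Definition U j := @RInt_gen R_CompleteNormedModule (u j) (Rbar_locally m_infty) (Rbar_locally p_infty).
Definition V j := @RInt_gen R_CompleteNormedModule (v j) (Rbar_locally m_infty) (Rbar_locally p_infty).

Lemma IU j : is_RInt_gen (u j) (Rbar_locally m_infty) (Rbar_locally p_infty) (U j).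
Proof.
  destruct (u_bound j) as [K [HK IK]].
  destruct (ex_int_gen (u j) K HK (u_cont j) IK) as [l Hl].
  unfold U. rewrite (@is_RInt_gen_unique R_CompleteNormedModule _ _ _ _ (u j) l Hl); auto;
  apply Proper_StrongProper, Rbar_locally_filter.
Qed.
Lemma IV j : is_RInt_gen (v j) (Rbar_locally m_infty) (Rbar_locally p_infty) (V j).
Proof.
  destruct (v_bound j) as [K [HK IK]].
  destruct (ex_int_gen (v j) K HK (v_cont j) IK) as [l Hl].
  unfold V. rewrite (@is_RInt_gen_unique R_CompleteNormedModule _ _ _ _ (v j) l Hl); auto;
  apply Proper_StrongProper, Rbar_locally_filter.
Qed.

Definition ru p x := (- (2 * m + 1) / 2) * u (S (S p)) x + ((1 - 2 * m) * INR (S p)) * u p x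
   + (- ki) * u (S p) x + (- kr) * v (S p) x.
Definition rv p x := (- (2 * m + 1) / 2) * v (S (S p)) x + ((1 - 2 * m) * INR (S p)) * v p x
   + (- ki) * v (S p) x + kr * u (S p) x.

Lemma du p (x : R) : is_derive (u (S p)) x (ru p x).
Proof.
  unfold ru, u, v, w. auto_derive.
  - apply herm_ex_derive.
  - change (Derive (fun x0 => hermite (S p) x0) x) with (Derive (hermite (S p)) x).
    rewrite (is_derive_unique _ _ _ (herm_derive (S p) x)). simpl pred.
    rewrite (hermSS p x). replace (x * (x * 1)) with (x ^ 2) by ring. unfold Rdiv. match goal with |- ?a = ?b => change (@eq R a b) end. generalize (exp (- m * x ^ 2)) (exp (- ki * x)) (exp (- x ^ 2 * / 2)) (hermite (S p) x) (hermite p x) (cos (kr * x)) (sin (kr * x)) (INR (S p)). intros. field.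
Qed.
Lemma dv p (x : R) : is_derive (v (S p)) x (rv p x).
Proof.
  unfold rv, u, v, w. auto_derive.
  - apply herm_ex_derive.
  - change (Derive (fun x0 => hermite (S p) x0) x) with (Derive (hermite (S p)) x).
    rewrite (is_derive_unique _ _ _ (herm_derive (S p) x)). simpl pred.
    rewrite (hermSS p x). replace (x * (x * 1)) with (x ^ 2) by ring. unfold Rdiv. field.
Qed.

Lemma zero_u p : (- (2 * m + 1) / 2) * U (S (S p)) + ((1 - 2 * m) * INR (S p)) * U p
   + (- ki) * U (S p) + (- kr) * V (S p) = 0.
Proof.
  apply (uniq0 (ru p)); [apply comb4; [apply IU|apply IU|apply IU|apply IV]|].
  destruct (u_bound (S p)) as [K [HK IK]].
  destruct (lim0_gen _ K HK IK) as [Lp Lm].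
  replace 0 with (0 - 0) by ring.
  apply (ext_all (Derive (u (S p)))). { intro x. apply is_derive_unique, du. }
  apply is_RInt_gen_Derive; auto.
  - apply (Filter_prod _ _ _ (fun _ => True) (fun _ => True)); try apply filter_true.
    intros. apply u_exd.
  - apply (Filter_prod _ _ _ (fun _ => True) (fun _ => True)); try apply filter_true.
    intros a b _ _ t _. apply (continuous_ext (ru p)). { intro z. symmetry. apply is_derive_unique, du. }
    unfold ru. apply (@ex_derive_continuous R_AbsRing R_NormedModule).
    unfold u, v, w. auto_derive. repeat split; apply herm_ex_derive.
Qed.

Lemma zero_v p : (- (2 * m + 1) / 2) * V (S (S p)) + ((1 - 2 * m) * INR (S p)) * V p
   + (- ki) * V (S p) + kr * U (S p) = 0.
Proof.
  apply (uniq0 (rv p)); [apply comb4; [apply IV|apply IV|apply IV|apply IU]|].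
  destruct (v_bound (S p)) as [K [HK IK]].
  destruct (lim0_gen _ K HK IK) as [Lp Lm].
  replace 0 with (0 - 0) by ring.
  apply (ext_all (Derive (v (S p)))). { intro x. apply is_derive_unique, dv. }
  apply is_RInt_gen_Derive; auto.
  - apply (Filter_prod _ _ _ (fun _ => True) (fun _ => True)); try apply filter_true.
    intros. apply v_exd.
  - apply (Filter_prod _ _ _ (fun _ => True) (fun _ => True)); try apply filter_true.
    intros a b _ _ t _. apply (continuous_ext (rv p)). { intro z. symmetry. apply is_derive_unique, dv. }
    unfold rv. apply (@ex_derive_continuous R_AbsRing R_NormedModule).
    unfold u, v, w. auto_derive. repeat split; apply herm_ex_derive.
Qed.
End Main.
Definition Nn j := / (Rpower PI (1/4) * sqrt (2 ^ j * INR (fact j))).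

Lemma integrand_eq m kr ki j x :
  ((RtoC (exp (- m * x ^ 2)) * cexp (Ci * (kr, ki) * RtoC x)) * RtoC (hermite_fun j x))%C
  = (Nn j * u m kr ki j x, Nn j * v m kr ki j x).
Proof.
  unfold cexp, hermite_fun, u, v, w, Nn, Cmult, RtoC, Ci, Re, Im; simpl.
  replace ((0 * kr - 1 * ki) * x - (0 * ki + 1 * kr) * 0) with (- ki * x) by ring.
  replace ((0 * kr - 1 * ki) * 0 + (0 * ki + 1 * kr) * x) with (kr * x) by ring.
  replace (x * (x * 1)) with (x ^ 2) by ring.
  f_equal; ring.
Qed.

Lemma coef_eq m kr ki (hm : - (1/2) < m) j :
  hermite_coef m (kr, ki) j = (Nn j * U m kr ki j, Nn j * V m kr ki j).
Proof.
  unfold hermite_coef.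
  apply (@is_RInt_gen_unique C_R_CompleteNormedModule); try apply Proper_StrongProper, Rbar_locally_filter.
  apply (ext_all (fun x => (Nn j * u m kr ki j x, Nn j * v m kr ki j x))).
  { intro x. symmetry. apply integrand_eq. }
  apply is_RInt_gen_pair.
  - exact (is_RInt_gen_scal _ (Nn j) _ (IU m kr ki hm j)).
  - exact (is_RInt_gen_scal _ (Nn j) _ (IV m kr ki hm j)).
Qed.

Lemma sfact_pos j : 0 < sqrt (2 ^ j * INR (fact j)).
Proof.
  apply sqrt_lt_R0. apply Rmult_lt_0_compat.
  - apply pow_lt; lra.
  - apply lt_0_INR, lt_O_fact.
Qed.

Lemma P_pos : 0 < Rpower PI (1/4).
Proof. unfold Rpower. apply exp_pos. Qed.

Lemma Nn_S j : Nn (S j) = Nn j / sqrt (2 * INR (S j)).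
Proof.
  unfold Nn.
  assert (E: sqrt (2 ^ S j * INR (fact (S j))) = sqrt (2 * INR (S j)) * sqrt (2 ^ j * INR (fact j))).
  { rewrite <- sqrt_mult_alt.
    - f_equal. simpl pow. rewrite fact_simpl, mult_INR. ring.
    - pose proof (pos_INR (S j)). lra. }
  rewrite E.
  assert (0 < sqrt (2 * INR (S j))).
  { apply sqrt_lt_R0. pose proof (lt_0_INR (S j) ltac:(lia)). lra. }
  pose proof (sfact_pos j). pose proof P_pos.
  field. repeat split; lra.
Qed.

Theorem lemma2p1 (m : R) (k : C) (hm : - (1/2) < m) (n : nat) (hn : (1 <= n)%nat) :
  hermite_coef m k (S n) =
    ((RtoC (/ (2 * m + 1)) * Ci * k * RtoC (sqrt (2 / INR (S n))) * hermite_coef m k n)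
     - (RtoC ((2 * m - 1) / (2 * m + 1)) * RtoC (sqrt (INR n / INR (S n)))
        * hermite_coef m k (n - 1)))%C.
Proof.
  destruct n as [|n']; [lia|]. replace (S n' - 1)%nat with n' by lia.
  destruct k as [kr ki].
  rewrite !coef_eq by exact hm.
  pose proof (zero_u m kr ki hm n') as Zu. pose proof (zero_v m kr ki hm n') as Zv.
  set (b := INR (S (S n'))) in *. set (c := INR (S n')) in *.
  assert (Hc : 0 < c) by (apply lt_0_INR; lia).
  assert (Hb : 0 < b) by (apply lt_0_INR; lia).
  set (r := sqrt (2 * b)).
  assert (Hr : 0 < r) by (apply sqrt_lt_R0; lra).
  assert (Hrr : r * r = 2 * b) by (apply sqrt_sqrt; lra).
  set (q := sqrt (2 * c)).
  assert (Hq : 0 < q) by (apply sqrt_lt_R0; lra).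
  assert (Hqq : q * q = 2 * c) by (apply sqrt_sqrt; lra).
  set (s3 := sqrt (c / b)).
  assert (Hs3 : 0 < s3) by (apply sqrt_lt_R0; apply Rdiv_lt_0_compat; lra).
  assert (F1 : Nn (S (S n')) = Nn (S n') / r) by apply Nn_S.
  assert (F0 : Nn (S n') = Nn n' / q) by apply Nn_S.
  assert (F2 : sqrt (2 / b) = 2 / r).
  { assert (sqrt (2 / b) * r = 2).
    { unfold r. rewrite <- sqrt_mult_alt by (apply Rlt_le, Rdiv_lt_0_compat; lra).
      replace (2 / b * (2 * b)) with (2 * 2) by (field; lra). apply sqrt_square; lra. }
    apply (Rmult_eq_reg_r r); [|lra]. rewrite H. field. lra. }
  assert (F4 : s3 * r = q).
  { unfold s3, r, q. rewrite <- sqrt_mult_alt by (apply Rlt_le, Rdiv_lt_0_compat; lra).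
    f_equal. field. lra. }
  assert (F3 : Nn n' = (2 * c / r * Nn (S n')) / s3).
  { rewrite F0. apply (Rmult_eq_reg_r s3); [|lra].
    replace (2 * c / r * (Nn n' / q) / s3 * s3) with (2 * c * Nn n' / (r * q)) by (field; lra).
    replace (r * q) with (r * (s3 * r)) by (rewrite F4; reflexivity).
    rewrite <- Hqq, <- F4. field. lra. }
  rewrite F1, F2, F3.
  set (N := Nn (S n')).
  assert (HU : U m kr ki (S (S n')) = 2 / (2 * m + 1) * ((1 - 2 * m) * c * U m kr ki n' - ki * U m kr ki (S n') - kr * V m kr ki (S n'))).
  { apply (Rmult_eq_reg_l (2 * m + 1)); [|lra]. field_simplify; [|lra]. lra. }
  assert (HV : V m kr ki (S (S n')) = 2 / (2 * m + 1) * ((1 - 2 * m) * c * V m kr ki n' - ki * V m kr ki (S n') + kr * U m kr ki (S n'))).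
  { apply (Rmult_eq_reg_l (2 * m + 1)); [|lra]. field_simplify; [|lra]. lra. }
  rewrite HU, HV.
  unfold Cminus, Cmult, RtoC, Ci, Copp, Cplus; simpl.
  f_equal; field; repeat split; lra.
Qed.
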